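(* There are absolute constants $a,b>0$ such that for every integer $r\ge1$ and every finite graph $G$, \[\tilde\nabla_{r-1}(G)\le \bigl(a\cdot r\cdot \mathrm{fw}_r(G)\cdot\deg(G)+b\bigr)^{36}.\]
   Context: Graphs are finite, simple, undirected. $\tilde\nabla_s(G)$ is the maximum of $2|E(H)|/|V(H)|$ over graphs $H$ such that some graph obtained from $H$ by replacing every edge by a path of length at most $s+1$ is a subgraph of $G$. $\deg(G)$ is the degeneracy: the least $d$ such that some total order of $V(G)$ has every vertex with at most $d$ earlier neighbours. A $k$-flip of $G$ is obtained by choosing a partition of $V(G)$ into at most $k$ parts and, for some pairs $A,B$ of (possibly equal) parts, inverting adjacency of every pair of distinct $x\in A,y\in B$. Flipper game of radius $r$ and width $k$: $G_0=G$, runner chooses $v_0$; in round $i\ge1$ the flipper announces a $k$-flip $G_i$ of $G$, the runner moves from $v_{i-1}$ to $v_i$ along a path of length at most $r$ in $G_{i-1}$; the flipper wins if $v_i$ is isolated in $G_i$. $\mathrm{fw}_r(G)$ is the least $k$ for which the flipper has a winning strategy. *)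

(* Defs.v *)
(* Finite simple graphs are symmetric irreflexive relations
   [e : rel T] on a finType [T]. *)
From mathcomp Require Import all_boot all_order all_algebra.
Set Implicit Arguments. Unset Strict Implicit. Unset Printing Implicit Defensive.
Import Order.TTheory GRing.Theory Num.Theory.

Section Defs.
Variable T : finType.
Implicit Types (e g : rel T).

(* A total order of V(G) is given by an injective rank function into nat;
   [d] bounds the number of earlier neighbours of every vertex. *)
Definition has_degeneracy_order e (d : nat) : Prop :=
  exists rk : T -> nat, injective rk /\
    forall v : T, #|[set u | e v u && (rk u < rk v)]| <= d.

Definition is_degeneracy e (d : nat) : Prop :=
  has_degeneracy_order e d /\ forall d', has_degeneracy_order e d' -> d <= d'.

(* k-flip: partition given by [part : T -> 'I_k] (at most k nonempty parts),
   and a symmetric relation [F] on parts saying which pairs (A,B) (possibly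
   A = B) get their adjacency inverted between distinct vertices. *)
Definition flip e (k : nat) (part : T -> 'I_k) (F : rel 'I_k) : rel T :=
  fun x y => (x != y) && (e x y (+) F (part x) (part y)).

Definition isolated g (w : T) : Prop := forall u, ~~ g w u.

Definition reach g (r : nat) (v w : T) : Prop :=
  exists s : seq T, size s <= r /\ path g v s /\ last v s = w.

(* The position is the
   previous graph G_{i-1} together with the runner's vertex v_{i-1};
   flipper wins from it if he can announce a k-flip G_i of G such that every
   runner move (path of length <= r in G_{i-1}) ends at a vertex isolated
   in G_i or at a position again winning for flipper.  Being an inductive
   predicate, this means flipper wins in finitely many rounds. *)
Inductive flipper_wins_from e (r k : nat) : rel T -> T -> Prop :=
| FlipperWin (g : rel T) (v : T) (part : T -> 'I_k) (F : rel 'I_k) :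
    symmetric F ->
    (forall w, reach g r v w ->
       isolated (flip e part F) w \/ flipper_wins_from e r k (flip e part F) w) ->
    flipper_wins_from e r k g v.

(* G_0 = G, and runner chooses v_0 arbitrarily *)
Definition flipper_wins e (r k : nat) : Prop :=
  forall v0 : T, flipper_wins_from e r k e v0.

Definition is_flip_width e (r k : nat) : Prop :=
  flipper_wins e r k /\ forall k', flipper_wins e r k' -> k <= k'.

End Defs.

(* The graph H = (U, f) has a subdivision, where every edge is replaced by a
   path of length at most s+1, that is a subgraph of G = (T, e):
   [phi] maps branch vertices injectively, [P u v] is the sequence of internal
   vertices of the path replacing the edge uv (P v u is its reverse); paths
   have at most s internal vertices, are simple, avoid branch vertices, are
   internally disjoint from each other, and consecutive vertices are adjacent
   in G. *)
Definition shallow_subdivision_in (U T : finType) (f : rel U) (e : rel T)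
    (s : nat) : Prop :=
  exists (phi : U -> T) (P : U -> U -> seq T),
    injective phi /\
    forall u v, f u v ->
      [/\ path e (phi u) (rcons (P u v) (phi v)),
          size (P u v) <= s,
          uniq (P u v),
          P v u = rev (P u v) &
          ((forall x, x \in P u v -> forall w, x != phi w) /\
          (forall u' v', f u' v' -> forall x, x \in P u v -> x \in P u' v' ->
             (u' = u /\ v' = v) \/ (u' = v /\ v' = u)))].

Definition num_edges (U : finType) (f : rel U) : nat :=
  #|[set p : U * U | f p.1 p.2]| %/ 2.

(* \tilde\nabla_s(G) <= x, i.e. 2|E(H)|/|V(H)| <= x for every H that is a
   (<= s+1)-subdivision-subgraph of G (with the convention 0/0 = 0). *)
Definition nabla_le (T : finType) (e : rel T) (s : nat) (x : rat) : Prop :=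
  forall (U : finType) (f : rel U), symmetric f -> irreflexive f ->
    shallow_subdivision_in f e s ->
    ((2 * num_edges f)%:R / #|U|%:R <= x)%R.

(* Main.v *)
Require Import Defs.
From mathcomp Require Import all_boot all_order all_algebra.
From mathcomp Require Import zify.
Import Order.TTheory GRing.Theory Num.Theory.
Set Implicit Arguments. Unset Strict Implicit. Unset Printing Implicit Defensive.

Lemma card_bigcup_le (T I : finType) (P : pred I) (F : I -> {set T}) :
  #|\bigcup_(i | P i) F i| <= \sum_(i | P i) #|F i|.
Proof.
elim/big_rec2: _ => [|i n S _ IH]; first by rewrite cards0.
apply: leq_trans (leq_card_setU _ _) _; by rewrite leq_add2l.
Qed.


Lemma drop_lemma (c : nat -> bool) m n : m <= n -> c m -> ~~ c n ->
  exists j, [/\ m <= j, j < n, c j & ~~ c j.+1].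
Proof.
elim: n => [|n IH]; first by rewrite leqn0 => /eqP -> ->.
rewrite leq_eqVlt => /orP [/eqP -> -> //|]; rewrite ltnS => hmn hcm hcn.
case hc: (c n).
  by exists n; split => //; rewrite hc.
have [j [h1 h2 h3 h4]] := IH hmn hcm (negbT hc).
by exists j; split => //; apply: ltnW.
Qed.

Section KFree.
Variables (T : finType) (e : rel T) (esym : symmetric e) (eirr : irreflexive e).
Variables (d : nat) (rk : T -> nat) (rkinj : injective rk)
  (rkdeg : forall v, #|[set u | e v u && (rk u < rk v)]| <= d).

Lemma kfree (X Y : {set T}) : (forall x y, x \in X -> y \in Y -> e x y) ->
  #|X| <= d \/ #|Y| <= d.
Proof.
move=> H.
case: (set_0Vmem (X :|: Y)) => [/eqP|[z0 hz0]].
  by rewrite setU_eq0 => /andP [/eqP -> _]; left; rewrite cards0.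
case: (arg_maxnP rk hz0) => z hz hmax.
have lt_of w : w \in X :|: Y -> w != z -> rk w < rk z.
  move=> hw hwz; have hle : rk w <= rk z := hmax w hw; rewrite ltn_neqAle hle andbT.
  apply: contra hwz => /eqP /rkinj ->; done.
case/setUP: hz => hz; [right|left].
  apply: leq_trans (rkdeg z); apply: subset_leq_card; apply/subsetP => y hy.
  rewrite inE (H _ _ hz hy) /= lt_of ?inE ?hy ?orbT //.
  by apply/eqP => eyz; move: (H _ _ hz hy); rewrite eyz eirr.
apply: leq_trans (rkdeg z); apply: subset_leq_card; apply/subsetP => x hx.
rewrite inE esym (H _ _ hx hz) /= lt_of ?inE ?hx //.
by apply/eqP => exz; move: (H _ _ hx hz); rewrite exz eirr.
Qed.
End KFree.

Lemma card_bigcup_const (T I : finType) (P : pred I) (F : I -> {set T}) c :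
  (forall i, P i -> #|F i| <= c) -> #|\bigcup_(i | P i) F i| <= #|I| * c.
Proof.
move=> H; have h1 := card_bigcup_le P F.
have h2 : \sum_(i | P i) #|F i| <= \sum_(i | P i) c by apply: leq_sum.
have h3 : \sum_(i | P i) c <= #|I| * c.
  rewrite -big_filter big_const_seq count_predT iter_addn_0 mulnC leq_mul2r.
  rewrite size_filter; apply/orP; right; apply: leq_trans (count_size _ _) _; by rewrite cardT enumT /index_enum unlock_with.
exact: leq_trans h1 (leq_trans h2 h3).
Qed.


Section Reach.
Variable T : finType.

Fixpoint Rset (g : rel T) (u : T) (j : nat) : {set T} :=
  if j is j'.+1 then Rset g u j' :|: [set y | [exists x in Rset g u j', g x y]]
  else [set u].

Lemma Rset0 g u : u \in Rset g u 0.
Proof. by rewrite /= inE. Qed.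

Lemma Rset_sub g u j : Rset g u j \subset Rset g u j.+1.
Proof. by rewrite /= subsetUl. Qed.

Lemma Rset_mono g u j j' : j <= j' -> Rset g u j \subset Rset g u j'.
Proof.
elim: j' => [|j' IH]; first by rewrite leqn0 => /eqP ->.
rewrite leq_eqVlt => /orP [/eqP -> //|]; rewrite ltnS => h.
exact: subset_trans (IH h) (Rset_sub _ _ _).
Qed.

Lemma Rset_step g u j x y : x \in Rset g u j -> g x y -> y \in Rset g u j.+1.
Proof.
move=> hx hg; rewrite /= inE; apply/orP; right; rewrite inE.
by apply/existsP; exists x; rewrite hx.
Qed.

Lemma Rset_reach g u j y : y \in Rset g u j -> reach g j u y.
Proof.
elim: j y => [|j IH] y /=.
  by rewrite inE => /eqP ->; exists [::].
case/setUP.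
  move=> /IH [s [h1 [h2 h3]]]; exists s; split => //; exact: leqW.
rewrite inE => /existsP [x /andP [/IH [s [h1 [h2 h3]]] hxy]].
exists (rcons s y); split; [|split].
- by rewrite size_rcons ltnS.
- by rewrite rcons_path h2 h3.
- by rewrite last_rcons.
Qed.

Lemma reach_nonisol (g : rel T) j u y : reach g j u y -> y != u -> exists x, g u x.
Proof.
move=> [s [_ [hp hl]]] hyu; case: s hp hl => [|x s] /=.
  by move=> _ hl; rewrite hl eqxx in hyu.
by move=> /andP [h _] _; exists x.
Qed.

End Reach.


Section Core.
Variables (T : finType) (e : rel T) (esym : symmetric e) (eirr : irreflexive e).
Variables (d : nat) (rk : T -> nat) (rkinj : injective rk)
  (rkdeg : forall v, #|[set u | e v u && (rk u < rk v)]| <= d).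
Variables (U : finType) (f : rel U) (firr : irreflexive f).
Variables (phi : U -> T) (phiinj : injective phi) (P : U -> U -> seq T) (r : nat).
Hypothesis hpath : forall a b, f a b -> path e (phi a) (rcons (P a b) (phi b)).
Hypothesis hsize : forall a b, f a b -> size (P a b) < r.
Hypothesis havoid : forall a b, f a b -> forall x, x \in P a b -> forall w, x != phi w.
Hypothesis hdisj : forall a b, f a b -> forall a' b', f a' b' -> forall x,
  x \in P a b -> x \in P a' b' -> (a' = a /\ b' = b) \/ (a' = b /\ b' = a).

Definition pos a b j := nth (phi b) (phi a :: rcons (P a b) (phi b)) j.

Lemma pos_end a b j : size (P a b) < j -> pos a b j = phi b.
Proof.
case: j => [|j] //; rewrite ltnS /pos /= nth_rcons => h.
by rewrite ltnNge h /=; case: ifP.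
Qed.

Lemma pos_int a b j : 0 < j -> j <= size (P a b) -> pos a b j \in P a b.
Proof.
case: j => [|j] // _ h; rewrite /pos /= nth_rcons h; exact: mem_nth.
Qed.

Lemma pos_edge a b j : f a b -> j <= size (P a b) -> e (pos a b j) (pos a b j.+1).
Proof.
move=> fab hj; have := hpath fab; move/(pathP (phi b)) => H.
by apply: H; rewrite size_rcons ltnS.
Qed.

Lemma pos_avoid a b j w : f a b -> 0 < j -> j <= size (P a b) -> pos a b j != phi w.
Proof. move=> fab h1 h2; apply: (havoid fab); exact: pos_int. Qed.

Definition endsOf (x : T) : {set U} :=
  if [pick p : U * U | f p.1 p.2 && (x \in P p.1 p.2)] is Some p
  then [set p.1; p.2] else set0.

Lemma endsOfP a b x : f a b -> x \in P a b -> b \in endsOf x.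
Proof.
move=> fab hx; rewrite /endsOf; case: pickP => [[a' b'] /= /andP [f' hx']|].
  case: (hdisj fab f' hx hx') => [[-> ->]|[-> ->]]; by rewrite !inE eqxx ?orbT.
by move=> /(_ (a, b)); rewrite /= fab hx.
Qed.

Lemma card_endsOf x : #|endsOf x| <= 2.
Proof.
rewrite /endsOf; case: pickP => [p _|_]; last by rewrite cards0.
by rewrite cards2; case: (_ != _).
Qed.

Definition pre (x : T) : {set U} := [set w | phi w == x].

Lemma card_pre x : #|pre x| <= 1.
Proof.
apply/card_le1P => w; rewrite inE => /eqP hw w'.
rewrite inE; apply/eqP/eqP => [h|->//]; apply: phiinj; by rewrite h hw.
Qed.

Lemma card_ends_pre x : #|endsOf x :|: pre x| <= 3.
Proof.
apply: leq_trans (leq_card_setU _ _) _.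
exact: (leq_add (card_endsOf x) (card_pre x)).
Qed.


Lemma pos1_inj a b b' : f a b -> f a b' -> pos a b 1 = pos a b' 1 -> b = b'.
Proof.
move=> fab fab' heq.
case: (ltnP (size (P a b)) 1) => h; case: (ltnP (size (P a b')) 1) => h'.
- by apply: phiinj; rewrite -(pos_end h) -(pos_end h') heq.
- by move: (pos_avoid b fab' (ltn0Sn 0) h'); rewrite -heq (pos_end h) eqxx.
- by move: (pos_avoid b' fab (ltn0Sn 0) h); rewrite heq (pos_end h') eqxx.
- have hx := pos_int (ltn0Sn 0) h; have hx' := pos_int (ltn0Sn 0) h'.
  rewrite -heq in hx'.
  by case: (hdisj fab fab' hx hx') => [[_ ->]|[-> ->]].
Qed.

Lemma pos0 a b : pos a b 0 = phi a.
Proof. by []. Qed.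

Section Flip.
Variables (k : nat) (part : T -> 'I_k) (F : rel 'I_k) (g : rel T).
Hypothesis hg : forall x y, g x y = (x != y) && (e x y (+) F (part x) (part y)).

Definition W u j A := [set x in Rset g u j | part x == A].
Definition XS u j := [set x in Rset g u j | #|W u j (part x)| <= d].
Definition YB u j := [set y | [exists A, (d < #|W u j A|) && [forall x in W u j A, e x y]]].

Lemma card_XS u j : #|XS u j| <= k * d.
Proof.
have -> : k = #|'I_k| by rewrite card_ord.
apply: leq_trans (card_bigcup_const (P := fun A => #|W u j A| <= d) (F := W u j) _).
  apply: subset_leq_card; apply/subsetP => x; rewrite inE => /andP [hx hW].
  apply/bigcupP; exists (part x) => //; by rewrite inE hx eqxx.
by move=> A.
Qed.

Lemma card_YB u j : #|YB u j| <= k * d.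
Proof.
have -> : k = #|'I_k| by rewrite card_ord.
apply: leq_trans (card_bigcup_const (P := fun A => d < #|W u j A|)
   (F := fun A => [set y | [forall x in W u j A, e x y]]) _).
  apply: subset_leq_card; apply/subsetP => y; rewrite inE => /existsP [A /andP [h1 h2]].
  by apply/bigcupP; exists A => //; rewrite inE.
move=> A hA.
have hE : forall x y, x \in W u j A -> y \in [set y | [forall x in W u j A, e x y]] -> e x y.
  by move=> x y hx; rewrite inE => /forallP /(_ x); rewrite hx.
case: (kfree esym eirr rkinj rkdeg hE) => [h|//].
by rewrite leqNgt hA in h.
Qed.

Lemma lost_class u j x y : x \in Rset g u j -> y \notin Rset g u j.+1 -> e x y ->
  x \in XS u j \/ y \in YB u j.
Proof.
move=> hx hy exy.
case: (leqP #|W u j (part x)| d) => hW; [left|right]; first by rewrite inE hx.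
have hF : F (part x) (part y).
  apply/negPn/negP => hF; apply: (negP hy); apply: (Rset_step hx).
  rewrite hg exy; move: hF => /negbTE ->; rewrite andbT.
  by apply/eqP => exy'; move: exy; rewrite exy' eirr.
rewrite inE; apply/existsP; exists (part x); rewrite hW /=.
apply/forallP => x'; apply/implyP; rewrite inE => /andP [hx' /eqP hp].
have hxy' : x' != y.
  apply/eqP => h; apply: (negP hy); rewrite -h; exact: (subsetP (Rset_sub _ _ _)).
apply/negPn/negP => ne; apply: (negP hy); apply: (Rset_step hx').
by rewrite hg hxy' hp hF; move: ne => /negbTE ->.
Qed.

Definition Img u j := \bigcup_(x in XS u j :|: YB u j) (endsOf x :|: pre x).

Lemma card_Img u j : #|Img u j| <= 6 * (k * d).
Proof.
eapply leq_trans; first exact: card_bigcup_le.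
eapply leq_trans; first by apply: leq_sum => x _; exact: card_ends_pre.
rewrite sum_nat_const.
apply: leq_trans (leq_mul (leq_card_setU _ _) (leqnn 3)) _.
have := leq_add (card_XS u j) (card_YB u j).
move=> h; apply: leq_trans (leq_mul h (leqnn 3)) _.
by rewrite addnn -mul2n mulnC mulnA.
Qed.

Variable X : {set U}.

Definition Eset u := [set b in X | [exists a in X, f a b && g u (pos a b 1)]].
Definition Reached u := [set b in X | phi b \in Rset g u r].

Lemma Eset_sub u : Eset u \subset Reached u :|: \bigcup_(j0 : 'I_r) Img u j0.
Proof.
apply/subsetP => b; rewrite inE => /andP [hb /existsP [a /andP [ha /andP [fab hg1]]]].
case hR: (phi b \in Rset g u r).
  by rewrite inE; apply/orP; left; rewrite inE hb hR.
rewrite inE; apply/orP; right.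
have hr := hsize fab.
have hcr : ~~ (pos a b r \in Rset g u r) by rewrite pos_end // hR.
have [j [h1 h2 h3 h4]] := @drop_lemma (fun j => pos a b j \in Rset g u j) 1 r
  (leq_ltn_trans (leq0n _) hr) (Rset_step (Rset0 g u) hg1) hcr.
case: (ltnP (size (P a b)) j) => hj.
  have e1 : pos a b j.+1 = phi b by apply: pos_end; exact: ltnW.
  have e2 : pos a b j = phi b := pos_end hj.
  by move: h4; rewrite e1 -e2 (subsetP (Rset_sub _ _ _) _ h3).
apply/bigcupP; exists (Ordinal h2) => //=.
case: (lost_class h3 h4 (pos_edge fab hj)) => hc.
  apply/bigcupP; exists (pos a b j); first by rewrite inE hc.
  by rewrite inE (endsOfP fab (pos_int h1 hj)).
apply/bigcupP; exists (pos a b j.+1); first by rewrite inE hc orbT.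
case: (leqP j.+1 (size (P a b))) => hj1.
  by rewrite inE (endsOfP fab (pos_int (ltn0Sn _) hj1)).
by rewrite inE; apply/orP; right; rewrite inE pos_end.
Qed.

Lemma main_count u : #|Eset u| <= #|Reached u| + r * (6 * (k * d)).
Proof.
apply: leq_trans (subset_leq_card (Eset_sub u)) _.
apply: leq_trans (leq_card_setU _ _) _; rewrite leq_add2l.
have := card_bigcup_const (P := fun _ : 'I_r => true) (F := Img u) (c := 6 * (k * d)).
by rewrite card_ord; apply => j _; exact: card_Img.
Qed.

Section BadSec.
Variable M' : nat.
Hypothesis hdeg : forall a, a \in X -> d.+1 * M'.+2 <= #|[set b in X | f a b]|.

Definition BdA A := [set u in phi @: X | (#|Eset u| < M') && (part u == A)].

Lemma card_BdA A : #|BdA A| <= d.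
Proof.
case: (leqP #|BdA A| d) => // hlt; exfalso.
have [s [us ss subs]] := card_geqP (A := BdA A) (n := d.+1) hlt.
case: s us ss subs => [//|u1 s'] us ss subs.
set Bd := [set x in u1 :: s'].
have cBd : #|Bd| = d.+1 by rewrite cardsE (card_uniqP us).
have BdB : forall u, u \in Bd -> u \in BdA A by move=> u; rewrite inE => /subs.
have hu1 : u1 \in Bd by rewrite inE mem_head.
have := BdB _ hu1; rewrite inE => /andP [/imsetP [a1 ha1 hu1e] /andP [_ /eqP hpa1]].
subst u1.
set UE := \bigcup_(u in Bd) Eset u.
set PB := [set b | phi b \in Bd].
set N := [set b in X | f a1 b].
set B1 := [set b in N | (b \notin UE) && (b \notin PB)].
have cUE : #|UE| <= d.+1 * M'.
  eapply leq_trans; first exact: card_bigcup_le.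
  eapply leq_trans; first (apply: leq_sum => u hu; apply: ltnW).
    by have := BdB _ hu; rewrite inE => /andP [_ /andP [h _]]; exact: h.
  by rewrite sum_nat_const cBd.
have cPB : #|PB| <= d.+1.
  rewrite -cBd -(card_imset _ phiinj); apply: subset_leq_card.
  by apply/subsetP => x /imsetP [b]; rewrite inE => hb ->.
have cN : #|N| <= #|B1| + #|UE| + #|PB|.
  apply: leq_trans (_ : #|B1 :|: UE :|: PB| <= _).
    apply: subset_leq_card; apply/subsetP => b hb.
    case hUE: (b \in UE); first by rewrite in_setU in_setU hUE orbT.
    case hPB: (b \in PB); first by rewrite in_setU hPB orbT.
    by rewrite in_setU in_setU; apply/orP; left; apply/orP; left; rewrite inE hb hUE hPB.
  apply: leq_trans (leq_card_setU _ _) _; rewrite leq_add2r.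
  exact: leq_card_setU.
set Y := [set pos a1 b 1 | b in B1].
have cY : #|Y| = #|B1|.
  apply: card_in_imset => b b'; rewrite !inE => /andP [/andP [_ fb] _] /andP [/andP [_ fb'] _].
  exact: pos1_inj.
have hE : forall u y, u \in Bd -> y \in Y -> e u y.
  move=> u y hu /imsetP [b hb ->].
  move: hb; rewrite !inE => /andP [/andP [hbX fb] /andP [hbUE hbPB]].
  have e1 : e (phi a1) (pos a1 b 1) by rewrite -(pos0 a1 b); apply: pos_edge.
  have ngu : forall u, u \in Bd -> g u (pos a1 b 1) = false.
    move=> u0 hu0; apply/negbTE/negP => hg0; apply: (negP hbUE).
    apply/bigcupP; exists u0 => //.
    rewrite /Eset inE hbX; apply/existsP; exists a1; by rewrite ha1 fb hg0.
  have hF : F A (part (pos a1 b 1)).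
    have := ngu _ hu1; rewrite hg e1 -hpa1.
    have -> : phi a1 != pos a1 b 1.
      by apply/eqP => h; move: e1; rewrite -h eirr.
    by case: (F _ _).
  have hneq : u != pos a1 b 1.
    case: (ltnP (size (P a1 b)) 1) => hs.
      rewrite (pos_end hs); apply/eqP => h; apply: (negP hbPB).
      by rewrite -h; move: hu; rewrite inE in_cons.
    have := BdB _ hu; rewrite inE => /andP [/imsetP [w hw ->] _].
    by rewrite eq_sym; apply: pos_avoid.
  have := ngu _ hu; rewrite hg hneq /=.
  have := BdB _ hu; rewrite inE => /andP [_ /andP [_ /eqP ->]].
  by rewrite hF; case: (e _ _).
case: (kfree esym eirr rkinj rkdeg hE) => h.
  by rewrite cBd ltnn in h.
have := hdeg ha1; rewrite -/N => hN.
move: h; rewrite cY; move: hN cN cUE cPB.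
rewrite mulnS.
lia.
Qed.

Definition Bad := [set u in phi @: X | #|Eset u| < M'].

Lemma card_Bad : #|Bad| <= k * d.
Proof.
have -> : k = #|'I_k| by rewrite card_ord.
apply: leq_trans (card_bigcup_const (P := fun _ => true) (F := BdA) _).
  apply: subset_leq_card; apply/subsetP => u; rewrite inE => /andP [h1 h2].
  by apply/bigcupP; exists (part u) => //; rewrite inE h1 h2 eqxx.
by move=> A _; exact: card_BdA.
Qed.
End BadSec.

End Flip.

Section Game.
Variables (k : nat) (X : {set U}).
Let M := k * d + 2.
Let M' := M + r * (6 * (k * d)).
Hypothesis hdegX : forall a, a \in X -> d.+1 * M'.+2 <= #|[set b in X | f a b]|.

Lemma good_of (g : rel T) (part : T -> 'I_k) (F : rel 'I_k)
  (hg : forall x y, g x y = (x != y) && (e x y (+) F (part x) (part y))) u :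
  u \in phi @: X -> u \notin Bad g X M' -> M <= #|Reached g X u|.
Proof.
move=> hu hB; have := main_count hg X u.
have : M' <= #|Eset g X u| by move: hB; rewrite inE hu /= -leqNgt.
rewrite /M'; lia.
Qed.

Lemma exists_good (g : rel T) (part : T -> 'I_k) (F : rel 'I_k)
  (hg : forall x y, g x y = (x != y) && (e x y (+) F (part x) (part y))) (S : {set U}) :
  k * d < #|S| -> S \subset X -> exists2 b, b \in S & M <= #|Reached g X (phi b)|.
Proof.
move=> hS hSX.
have cB := card_Bad hg hdegX.
have : ~~ (S \subset [set b | phi b \in Bad g X M']).
  apply/negP => /subset_leq_card h.
  have : #|[set b | phi b \in Bad g X M']| <= #|Bad g X M'|.
    rewrite -(card_imset _ phiinj).
    by apply: subset_leq_card; apply/subsetP => x /imsetP [b]; rewrite inE => hb ->.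
  lia.
case/subsetPn => b hb; rewrite inE => hnb; exists b => //.
apply: (good_of hg) hnb; apply: imset_f; exact: (subsetP hSX).
Qed.

Lemma runner : forall (g : rel T) v, flipper_wins_from e r k g v -> M <= #|Reached g X v| -> False.
Proof.
fix IH 3.
move=> g v [] {g v} g v part F _ H hM.
set g' := flip e part F.
have hg' : forall x y, g' x y = (x != y) && (e x y (+) F (part x) (part y)) by [].
have hRX : Reached g X v \subset X by apply/subsetP => b; rewrite inE => /andP [].
have hlt : k * d < #|Reached g X v| by move: hM; rewrite /M; lia.
have [b hb hM'] := exists_good hg' hlt hRX.
have hreach : reach g r v (phi b).
  by apply: Rset_reach; move: hb; rewrite inE => /andP [].
case: (H _ hreach) => [iso|fw]; last exact: IH _ _ fw hM'.
have : 1 < #|Reached g' X (phi b)| by apply: leq_trans hM'; rewrite /M addn2.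
case/card_gt1P => b1 [b2 [hb1 hb2 hne]].
have [b' [hb' hne']] : exists b', b' \in Reached g' X (phi b) /\ b' != b.
  case: (eqVneq b1 b) => h; last by exists b1.
  by exists b2; split => //; rewrite -h eq_sym.
have : reach g' r (phi b) (phi b') by apply: Rset_reach; move: hb'; rewrite inE => /andP [].
move=> /reach_nonisol; case.
  by apply: contra hne' => /eqP /phiinj ->.
by move=> x hx; exact: (negP (iso x) hx).
Qed.

Lemma runner_start a0 : a0 \in X -> flipper_wins e r k -> False.
Proof.
move=> ha0 hfw.
have [part] : exists part : T -> 'I_k, True.
  by case: (hfw (phi a0)) => g v part F _ _; exists part.
move=> _.
have hg : forall x y, e x y = (x != y) && (e x y (+) (fun _ _ : 'I_k => false) (part x) (part y)).
  move=> x y /=; rewrite addbF; case: (eqVneq x y) => [->|//]; by rewrite eirr.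
have hX : k * d < #|X|.
  have h1 := hdegX ha0.
  have h2 : #|[set b in X | f a0 b]| <= #|X|.
    by apply: subset_leq_card; apply/subsetP => b; rewrite inE => /andP [].
  move: h1 h2; rewrite /M' /M; nia.
have [b hb hM] := @exists_good e part (fun _ _ => false) hg X hX (subxx X).
exact: runner (hfw (phi b)) hM.
Qed.

End Game.
End Core.


Section Extract.
Variables (U : finType) (f : rel U) (fsym : symmetric f).

Definition E2 (Z : {set U}) := #|[set p : U * U | (p.1 \in Z) && (p.2 \in Z) && f p.1 p.2]|.

Lemma E2_del (Z : {set U}) x : x \in Z -> E2 Z <= E2 (Z :\ x) + 2 * #|[set b in Z | f x b]|.
Proof.
move=> hx; set N := [set b in Z | f x b].
have hsub : [set p : U * U | (p.1 \in Z) && (p.2 \in Z) && f p.1 p.2] \subset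
   [set p : U * U | (p.1 \in Z :\ x) && (p.2 \in Z :\ x) && f p.1 p.2]
   :|: ([set (x, b) | b in N] :|: [set (a, x) | a in N]).
  apply/subsetP => [[a b]]; rewrite !inE /= => /andP [/andP [ha hb] fab].
  case: (eqVneq a x) => [ea|na].
    apply/orP; right; apply/orP; left; apply/imsetP; exists b; last by rewrite ea.
    by rewrite inE hb -ea fab.
  case: (eqVneq b x) => [eb|nb].
    apply/orP; right; apply/orP; right; apply/imsetP; exists a; last by rewrite eb.
    by rewrite inE ha -eb fsym fab.
  by apply/orP; left; rewrite ha hb fab.
apply: leq_trans (subset_leq_card hsub) _.
apply: leq_trans (leq_card_setU _ _) _; rewrite leq_add2l mul2n -addnn.
apply: leq_trans (leq_card_setU _ _) _.
exact: leq_add (leq_imset_card _ _) (leq_imset_card _ _).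
Qed.

Lemma extract (dl : nat) : forall n (Z : {set U}), #|Z| = n -> 2 * dl * #|Z| < E2 Z ->
  exists X : {set U}, (exists a, a \in X) /\
     forall a, a \in X -> dl <= #|[set b in X | f a b]|.
Proof.
elim=> [|n IH] Z hZ hE.
  move: hE; rewrite /E2; move/eqP: hZ; rewrite cards_eq0 => /eqP ->.
  have -> : [set p : U * U | (p.1 \in set0) && (p.2 \in set0) && f p.1 p.2] = set0.
    by apply/setP => p; rewrite !inE.
  by rewrite !cards0 muln0.
case: (boolP [forall a in Z, dl <= #|[set b in Z | f a b]|]) => hall.
  exists Z; split.
    by apply/set0Pn; rewrite -card_gt0 hZ.
  by move=> a ha; move/forallP: hall => /(_ a); rewrite ha.
move: hall; rewrite negb_forall => /existsP [x]; rewrite negb_imply -ltnNge => /andP [hx hlt].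
apply: (IH (Z :\ x)).
  by move: hZ; rewrite (cardsD1 x Z) hx add1n; case.
have h := E2_del hx.
have hc : #|Z| = #|Z :\ x| + 1 by rewrite (cardsD1 x Z) hx addnC.
move: hE h hlt; rewrite hc; nia.
Qed.

End Extract.

Lemma num_bound (r k d : nat) : 0 < r -> 0 < k ->
  2 * (d.+1 * (k * d + 2 + r * (6 * (k * d))).+2) <= (r * k * d + 2) ^ 36.
Proof.
move=> hr hk.
set Z := r * k * d.
have h1 : k * d <= Z by rewrite /Z -mulnA leq_pmull.
have h2 : d <= Z by rewrite /Z leq_pmull // muln_gt0 hr hk.
have h3 : r * (6 * (k * d)) = 6 * Z by rewrite /Z mulnCA !mulnA.
have h4 : (Z + 2) ^ 36 = (Z + 2) ^ 2 * (Z + 2) ^ 34 by rewrite -expnD.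
have h5 : 2 ^ 4 <= (Z + 2) ^ 4 by rewrite leq_exp2r // leq_addl.
have h5' : (Z + 2) ^ 4 <= (Z + 2) ^ 34 by rewrite leq_pexp2l // addn_gt0 orbT.
rewrite h3 h4.
have h7 : 16 <= (Z + 2) ^ 34 := leq_trans h5 h5'.
move: h7; set W := (Z + 2) ^ 34 => h7.
clearbody W Z.
have a1 : d.+1 <= Z.+1 by [].
have a2 : (k * d + 2 + 6 * Z).+2 <= 7 * Z + 4 by lia.
have a3 : 2 * (d.+1 * (k * d + 2 + 6 * Z).+2) <= 2 * (Z.+1 * (7 * Z + 4)).
  by rewrite leq_mul2l leq_mul.
apply: leq_trans a3 _.
have a4 : 2 * (Z.+1 * (7 * Z + 4)) <= (Z + 2) ^ 2 * 16.
  rewrite expnS expn1; nia.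
apply: leq_trans a4 _.
by rewrite leq_mul2l h7 orbT.
Qed.

Theorem mainTheorem9 :
  exists a b : rat, (0 < a)%R /\ (0 < b)%R /\
    forall r : nat, 1 <= r ->
    forall (T : finType) (e : rel T), symmetric e -> irreflexive e ->
    forall k d : nat, is_flip_width e r k -> is_degeneracy e d ->
      nabla_le e (r - 1)
        ((a * r%:R * k%:R * d%:R + b) ^+ 36)%R.
Proof.
exists 1%R, (2%:R)%R; split; first exact: ltr01.
split; first by rewrite ltr0n.
move=> r hr T e esym eirr k d [hfw _] [[rk [rkinj rkdeg]] _] U f fsym firr.
move=> [phi [P [phiinj hP]]].
have hpath : forall a b, f a b -> path e (phi a) (rcons (P a b) (phi b)).
  by move=> a b fab; case: (hP a b fab).
have hsize : forall a b, f a b -> size (P a b) < r.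
  move=> a b fab; case: (hP a b fab) => _ h _ _ _; move: h hr; lia.
have havoid : forall a b, f a b -> forall x, x \in P a b -> forall w, x != phi w.
  by move=> a b fab; case: (hP a b fab) => _ _ _ _ [].
have hdisj : forall a b, f a b -> forall a' b', f a' b' -> forall x,
    x \in P a b -> x \in P a' b' -> (a' = a /\ b' = b) \/ (a' = b /\ b' = a).
  by move=> a b fab; case: (hP a b fab) => _ _ _ _ [].
set dl := d.+1 * (k * d + 2 + r * (6 * (k * d))).+2.
have hE : E2 f setT <= 2 * dl * #|[set: U]|.
  rewrite leqNgt; apply/negP => hlt.
  have [X [[a0 ha0] hX]] := extract fsym (erefl _) hlt.
  exact: (runner_start esym eirr rkinj rkdeg phiinj hpath hsize havoid hdisj hX ha0 hfw).
have hne : 2 * num_edges f <= E2 f setT.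
  rewrite /num_edges /E2.
  have -> : [set p : U * U | (p.1 \in [set: U]) && (p.2 \in [set: U]) && f p.1 p.2]
           = [set p : U * U | f p.1 p.2] by apply/setP => p; rewrite !inE.
  by rewrite mulnC leq_trunc_div.
case: (posnP #|U|) => hU.
  rewrite hU invr0 mulr0; apply: exprn_ge0.
  by rewrite mul1r addr_ge0 // ?ler0n // !mulr_ge0 // ler0n.
have [u0 _] : exists u0 : U, True.
  by move/card_gt0P: hU => [u0 _]; exists u0.
have hk : 0 < k.
  by case: (hfw (phi u0)) => g v part F _ _; case: (part (phi u0)) => i hi; apply: leq_ltn_trans hi.
have hnum := num_bound d hr hk.
have hfin : 2 * num_edges f <= (r * k * d + 2) ^ 36 * #|U|.
  apply: leq_trans hne _; apply: leq_trans hE _; rewrite cardsT.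
  by rewrite leq_mul2r hnum orbT.
rewrite ler_pdivrMr ?ltr0n //.
have -> : ((1 * r%:R * k%:R * d%:R + 2%:R : rat) = (r * k * d + 2)%:R)%R.
  by rewrite mul1r natrD !natrM.
by rewrite -natrX -natrM ler_nat.
Qed.
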